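(* Let $i\in I$ and $k\in\mathbb{Z}$. \begin{enumerate} \item[(i)] Let $u\in\widehat{\mathcal{A}}_{[k+1]}$ be a homogeneous element with $e^\star_i(u)=0$. Then $f_{i,k}u=q^{-(\mathrm{wt}(f_{i,k}),\mathrm{wt}(u))}uf_{i,k}$. \item[(ii)] Let $v\in\widehat{\mathcal{A}}_{[k-1]}$ be a homogeneous element with $e'_i(v)=0$. Then $vf_{i,k}=q^{-(\mathrm{wt}(f_{i,k}),\mathrm{wt}(v))}f_{i,k}v$. \end{enumerate}
   Context: Let $\mathsf{C}=(c_{i,j})_{i,j\in I}$ be a finite-type Cartan matrix with simple roots $\alpha_i$, coroots $h_i$, symmetric form $(\alpha_i,\alpha_j)=\mathsf{d}_ic_{i,j}$ ($\min\mathsf{d}_i=1$), $q_i=q^{\mathsf{d}_i}$, $\mathbf{k}=\mathbb{Q}(q^{1/2})$. $\widehat{\mathcal{A}}$ is the bosonic extension generated by $f_{i,p}$ ($i\in I,p\in\mathbb{Z}$) with quantum Serre relations among $\{f_{i,p}\}_{i\in I}$ for fixed $p$, $f_{i,m}f_{j,p}=q_i^{(-1)^{p-m+1}c_{i,j}}f_{j,p}f_{i,m}$ ($p>m+1$), $f_{i,p}f_{j,p+1}=q_i^{c_{i,j}}f_{j,p+1}f_{i,p}+\delta_{i,j}(1-q_i^2)$, graded by $\mathrm{wt}(f_{i,p})=(-1)^{p+1}\alpha_i$. $\widehat{\mathcal{A}}_{[k]}$ is the subalgebra generated by $f_{i,k}$ ($i\in I$), identified with $\mathcal{U}_q^-(\mathfrak{g})$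 via $f_{i,k}\mapsto f_i$; through this, the $q$-derivations $e'_i,e^\star_i$ of $\mathcal{U}_q^-(\mathfrak{g})$ act on it, where $e'_i(f_j)=e^\star_i(f_j)=\delta_{i,j}$, $e'_i(xy)=e'_i(x)y+q_i^{\langle h_i,\mathrm{wt}(x)\rangle}xe'_i(y)$, $e^\star_i(xy)=xe^\star_i(y)+q_i^{\langle h_i,\mathrm{wt}(y)\rangle}e^\star_i(x)y$. *)

(* Defs.v *)
From HB Require Import structures.
From mathcomp Require Import all_boot all_order all_algebra.
From mathcomp Require Import fraction.
Set Implicit Arguments. Unset Strict Implicit. Unset Printing Implicit Defensive.
Import Order.TTheory GRing.Theory Num.Theory.
Local Open Scope ring_scope.

Definition kfield : fieldType := {fraction {poly rat}}.
(* qh = q^{1/2}, a transcendental generator *)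
Definition qh : kfield := tofrac ('X : {poly rat}).
Definition q : kfield := qh ^+ 2.
Definition qi (I : Type) (d : I -> nat) (i : I) : kfield := q ^+ d i.

Record is_finite_cartan (I : finType) (C : I -> I -> int) (d : I -> nat) : Prop := {
  cartan_diag : forall i, C i i = 2;
  cartan_offdiag : forall i j, i != j -> C i j <= 0;
  cartan_symmetrizable : forall i j, (d i)%:Z * C i j = (d j)%:Z * C j i;
  symm_pos : forall i, (0 < d i)%N;
  symm_min : exists i, d i = 1%N;
  cartan_posdef : forall x : I -> rat, (exists i, x i != 0) ->
     0 < \sum_(a : I) \sum_(b : I) x a * (d a)%:R * (C a b)%:~R * x b }.

(* the symmetric form (lambda, mu) on the root lattice Z^I,
   (alpha_a, alpha_b) = d_a c_{a,b} *)
Definition rform (I : finType) (C : I -> I -> int) (d : I -> nat)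
  (la mu : I -> int) : int :=
  \sum_(a : I) \sum_(b : I) la a * (d a)%:Z * C a b * mu b.

(** * Free (noncommutative) algebra over k on a set X of generators,
    elements are formal linear combinations of words *)
Definition ncpoly (X : Type) := seq (kfield * seq X).

Definition nccoef (X : eqType) (p : ncpoly X) (w : seq X) : kfield :=
  \sum_(t <- p | t.2 == w) t.1.
Definition ncword (X : Type) (w : seq X) : ncpoly X := [:: (1, w)].
Definition ncconst (X : Type) (c : kfield) : ncpoly X := [:: (c, [::])].
Definition ncadd (X : Type) (p r : ncpoly X) : ncpoly X := p ++ r.
Definition ncscale (X : Type) (c : kfield) (p : ncpoly X) : ncpoly X :=
  [seq (c * t.1, t.2) | t <- p].
Definition ncmul (X : Type) (p r : ncpoly X) : ncpoly X :=
  [seq (a.1 * b.1, a.2 ++ b.2) | a <- p, b <- r].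
Definition ncsub (X : Type) (p r : ncpoly X) : ncpoly X := p ++ ncscale (-1) r.

(* p lies in the two-sided ideal generated by the relations R:
   p = sum_t c_t * a_t * r_t * b_t  with words a_t, b_t and r_t in R *)
Definition in_ideal (X : eqType) (R : ncpoly X -> Prop) (p : ncpoly X) : Prop :=
  exists l : seq (kfield * seq X * ncpoly X * seq X),
    (forall t, t \in l -> R t.1.2) /\
    forall w, nccoef p w =
      nccoef (flatten [seq ncscale t.1.1.1
                          (ncmul (ncmul (ncword t.1.1.2) t.1.2) (ncword t.2))
                      | t <- l]) w.

Definition nceqmod (X : eqType) (R : ncpoly X -> Prop) (p r : ncpoly X) : Prop :=
  in_ideal R (ncsub p r).

Definition qint (a : kfield) (n : nat) : kfield := (a ^+ n - a ^- n) / (a - a^-1).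
Definition qfact (a : kfield) (n : nat) : kfield := \prod_(1 <= m < n.+1) qint a m.
Definition qbinom (a : kfield) (n r : nat) : kfield :=
  qfact a n / (qfact a r * qfact a (n - r)).

(* quantum Serre element for generators g : I -> X, i <> j:
   sum_{r=0}^{1-c_ij} (-1)^r [1-c_ij choose r]_{q_i} g_i^{1-c_ij-r} g_j g_i^r *)
Definition serre_rel (I : Type) (X : Type) (C : I -> I -> int) (d : I -> nat)
  (g : I -> X) (i j : I) : ncpoly X :=
  let m := absz (1 - C i j) in
  flatten [seq ncscale ((-1) ^+ r * qbinom (qi d i) m r)
                 (ncword (nseq (m - r) (g i) ++ g j :: nseq r (g i)))
          | r <- iota 0 m.+1].

(** * U_q^-(g): generators f_i (i in I), quantum Serre relations *)
Definition RU (I : finType) (C : I -> I -> int) (d : I -> nat) (p : ncpoly I) : Prop :=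
  exists i j, i != j /\ p = serre_rel C d id i j.

(** * The bosonic extension \hat A: generators f_{i,p} = (i,p) *)
Definition RA (I : finType) (C : I -> I -> int) (d : I -> nat)
  (p : ncpoly (I * int)) : Prop :=
  (exists (k : int) (i j : I), i != j /\ p = serre_rel C d (fun a => (a, k)) i j)
  \/ (exists (i j : I) (m r : int), m + 1 < r /\
        p = ncsub (ncword [:: (i, m); (j, r)])
                  (ncscale (qi d i ^ ((-1) ^+ absz (r - m + 1) * C i j))
                           (ncword [:: (j, r); (i, m)])))
  \/ (exists (i j : I) (m : int),
        p = ncsub (ncword [:: (i, m); (j, m + 1)])
                  (ncadd (ncscale (qi d i ^ C i j) (ncword [:: (j, m + 1); (i, m)]))
                         (ncconst _ (if i == j then 1 - qi d i ^+ 2 else 0)))).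

(* weight of f_{i,p} is (-1)^{p+1} alpha_i, as an element of Z^I *)
Definition wtA (I : finType) (g : I * int) : I -> int :=
  fun a => if g.1 == a then (if odd (absz g.2) then 1 else -1) else 0.
Definition wt_word (I : finType) (w : seq (I * int)) : I -> int :=
  fun a => \sum_(g <- w) wtA g a.
Definition homogeneous (I : finType) (p : ncpoly (I * int)) (ga : I -> int) : Prop :=
  forall w, nccoef p w != 0 -> forall a, wt_word w a = ga a.

(* identification U_q^- ~ \hat A_[k], f_j |-> f_{j,k} *)
Definition phi (I : Type) (k : int) (x : ncpoly I) : ncpoly (I * int) :=
  [seq (t.1, [seq (j, k) | j <- t.2]) | t <- x].

(** * q-derivations e'_i, e*_i on the free algebra (they preserve the Serre
    ideal, hence descend to U_q^-).  wt(f_j) = -alpha_j in U_q^-. *)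
Definition eprime_word (I : finType) (C : I -> I -> int) (d : I -> nat) (i : I)
  (w : seq I) : ncpoly I :=
  [seq (qi d i ^ (- \sum_(t <- take s w) C i t), take s w ++ drop s.+1 w)
  | s <- filter (fun s => nth i w s == i) (iota 0 (size w))].
Definition estar_word (I : finType) (C : I -> I -> int) (d : I -> nat) (i : I)
  (w : seq I) : ncpoly I :=
  [seq (qi d i ^ (- \sum_(t <- drop s.+1 w) C i t), take s w ++ drop s.+1 w)
  | s <- filter (fun s => nth i w s == i) (iota 0 (size w))].
Definition eprime (I : finType) (C : I -> I -> int) (d : I -> nat) (i : I)
  (p : ncpoly I) : ncpoly I :=
  flatten [seq ncscale t.1 (eprime_word C d i t.2) | t <- p].
Definition estar (I : finType) (C : I -> I -> int) (d : I -> nat) (i : I)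
  (p : ncpoly I) : ncpoly I :=
  flatten [seq ncscale t.1 (estar_word C d i t.2) | t <- p].

(* Main.v *)
Require Import Defs.
From HB Require Import structures.
From mathcomp Require Import all_boot all_order all_algebra.
From mathcomp Require Import fraction ring.
Set Implicit Arguments. Unset Strict Implicit. Unset Printing Implicit Defensive.
Import Order.TTheory GRing.Theory Num.Theory.
Local Open Scope ring_scope.


Definition sumc (X : Type) (p : ncpoly X) (G : seq X -> kfield) := \sum_(t <- p) t.1 * G t.2.
Definition ceq (X : eqType) (p r : ncpoly X) := forall w, nccoef p w = nccoef r w.

Section Gen.
Variable X : eqType.
Implicit Types (p r : ncpoly X) (G : seq X -> kfield).

Lemma sumc_ext p G G' : (forall v, G v = G' v) -> sumc p G = sumc p G'.
Proof. by move=> h; apply: eq_bigr => t _; rewrite h. Qed.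
Lemma sumc_nil G : sumc [::] G = 0. Proof. by rewrite /sumc big_nil. Qed.
Lemma sumc_cons t p G : sumc (t :: p) G = t.1 * G t.2 + sumc p G.
Proof. by rewrite /sumc big_cons. Qed.
Lemma sumc_cat p r G : sumc (p ++ r) G = sumc p G + sumc r G.
Proof. by rewrite /sumc big_cat. Qed.
Lemma sumc_scale c p G : sumc (ncscale c p) G = c * sumc p G.
Proof. by rewrite /sumc big_map mulr_sumr; apply: eq_bigr => t _; rewrite mulrA. Qed.
Lemma sumc_map (Y : eqType) (m : seq X -> seq Y) p (G : seq Y -> kfield) :
  sumc [seq (t.1, m t.2) | t <- p] G = sumc p (fun v => G (m v)).
Proof. by rewrite /sumc big_map. Qed.
Lemma sumc_word v G : sumc (ncword v) G = G v.
Proof. by rewrite /sumc big_seq1 mul1r. Qed.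
Lemma sumc_const c G : sumc (ncconst X c) G = c * G [::].
Proof. by rewrite /sumc big_seq1. Qed.
Lemma sumc_add p G G' : sumc p (fun v => G v + G' v) = sumc p G + sumc p G'.
Proof. by rewrite /sumc -big_split; apply: eq_bigr => t _; rewrite mulrDr. Qed.
Lemma sumc_mulc p c G : sumc p (fun v => c * G v) = c * sumc p G.
Proof. by rewrite /sumc mulr_sumr; apply: eq_bigr => t _; rewrite mulrCA. Qed.
Lemma sumc_sub p r G : sumc (ncsub p r) G = sumc p G - sumc r G.
Proof. by rewrite /ncsub sumc_cat sumc_scale mulN1r. Qed.
Lemma sumc_mul p r G :
  sumc (ncmul p r) G = sumc p (fun u => sumc r (fun v => G (u ++ v))).
Proof.
elim: p => [|a p IH]; first by rewrite /ncmul /= !sumc_nil.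
rewrite /ncmul /= sumc_cat -/(ncmul p r) IH sumc_cons; congr (_ + _).
rewrite /sumc big_map mulr_sumr; apply: eq_bigr => b _; by rewrite mulrA.
Qed.
Lemma sumc_flat (T : Type) (cf : T -> kfield) (L : T -> ncpoly X) (l : seq T) G :
  sumc (flatten [seq ncscale (cf t) (L t) | t <- l]) G = \sum_(t <- l) cf t * sumc (L t) G.
Proof.
elim: l => [|t l IH]; first by rewrite /= sumc_nil big_nil.
by rewrite /= sumc_cat IH big_cons sumc_scale.
Qed.

Lemma nccoefE p w : nccoef p w = sumc p (fun v => (v == w)%:R).
Proof.
rewrite /nccoef /sumc big_mkcond /=; apply: eq_bigr => t _.
by case: eqP => _; rewrite ?mulr1 ?mulr0.
Qed.

Lemma sum_group p (s : seq (seq X)) G : uniq s -> {subset map snd p <= s} ->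
  sumc p G = \sum_(u <- s) nccoef p u * G u.
Proof.
move=> us; elim: p => [|t p IH] sub.
  by rewrite sumc_nil big1 // => u _; rewrite /nccoef big_nil mul0r.
rewrite sumc_cons IH; last by move=> y yp; apply: sub; rewrite /= inE yp orbT.
have ts : t.2 \in s by apply: sub; rewrite /= inE eqxx.
rewrite [RHS](eq_bigr (fun u => (if t.2 == u then t.1 * G u else 0) + nccoef p u * G u)); last first.
  move=> u _; rewrite /nccoef big_cons; case: ifP => _ /=; last by rewrite add0r.
  by rewrite mulrDl.
rewrite big_split /=; congr (_ + _).
rewrite -big_mkcond /= (eq_bigl (pred1 t.2)); last by move=> u; rewrite /= eq_sym.
by rewrite -big_filter filter_pred1_uniq // big_seq1.
Qed.

Lemma ceq_sumc p r G : ceq p r -> sumc p G = sumc r G.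
Proof.
move=> h.
have us := undup_uniq (map snd p ++ map snd r).
rewrite (sum_group G us); last by move=> y yp; rewrite mem_undup mem_cat yp.
rewrite (sum_group G us); last by move=> y yp; rewrite mem_undup mem_cat yp orbT.
by apply: eq_bigr => u _; rewrite h.
Qed.

Lemma ceqP p r : (forall G, sumc p G = sumc r G) -> ceq p r.
Proof. by move=> h w; rewrite !nccoefE h. Qed.

Lemma sumc_hom p (Q : seq X -> kfield) Q0 G :
  (forall v, nccoef p v != 0 -> Q v = Q0) ->
  sumc p (fun v => Q v * G v) = Q0 * sumc p G.
Proof.
move=> h.
have us := undup_uniq (map snd p).
rewrite (sum_group _ us); last by move=> y yp; rewrite mem_undup.
rewrite (sum_group _ us); last by move=> y yp; rewrite mem_undup.
rewrite mulr_sumr; apply: eq_bigr => u _.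
have [->|nz] := eqVneq (nccoef p u) 0; first by rewrite !mul0r mulr0.
by rewrite h // mulrCA.
Qed.

Definition gen (l : seq (kfield * seq X * ncpoly X * seq X)) : ncpoly X :=
  flatten [seq ncscale t.1.1.1 (ncmul (ncmul (ncword t.1.1.2) t.1.2) (ncword t.2)) | t <- l].

Lemma sumc_core a r b G :
  sumc (ncmul (ncmul (ncword a) r) (ncword b)) G = sumc r (fun v => G (a ++ v ++ b)).
Proof.
rewrite sumc_mul sumc_mul sumc_word; apply: sumc_ext => v.
by rewrite sumc_word catA.
Qed.

Lemma sumc_gen l G : sumc (gen l) G =
  \sum_(t <- l) t.1.1.1 * sumc t.1.2 (fun v => G (t.1.1.2 ++ v ++ t.2)).
Proof. by rewrite /gen sumc_flat; apply: eq_bigr => t _; rewrite sumc_core. Qed.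

Variable R : ncpoly X -> Prop.

Lemma ideal_ceq p r : ceq p r -> in_ideal R p -> in_ideal R r.
Proof. by move=> h [l [hl e]]; exists l; split=> // w; rewrite -h e. Qed.

Lemma ideal_nil p : ceq p [::] -> in_ideal R p.
Proof. by move=> h; exists [::]; split=> // w; rewrite h. Qed.

Lemma ideal_cat p r : in_ideal R p -> in_ideal R r -> in_ideal R (p ++ r).
Proof.
move=> [l1 [h1 e1]] [l2 [h2 e2]]; exists (l1 ++ l2); split.
  by move=> t; rewrite mem_cat => /orP[]; [apply: h1|apply: h2].
move=> w; rewrite map_cat flatten_cat /nccoef !big_cat /=.
by rewrite -/(nccoef p w) -/(nccoef r w) e1 e2.
Qed.

Lemma ideal_gen (l : seq (kfield * seq X * ncpoly X * seq X)) p :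
  (forall t, t \in l -> R t.1.2) -> ceq p (gen l) -> in_ideal R p.
Proof. by move=> h e; exists l. Qed.

Lemma ideal_scale c p : in_ideal R p -> in_ideal R (ncscale c p).
Proof.
move=> [l [hl e]].
exists [seq (c * t.1.1.1, t.1.1.2, t.1.2, t.2) | t <- l]; split.
  move=> t /mapP[t' t'l ->] /=; exact: hl.
apply: ceqP => G; rewrite sumc_scale (ceq_sumc _ e) -/(gen _) !sumc_gen big_map.
by rewrite mulr_sumr; apply: eq_bigr => t _; rewrite mulrA.
Qed.

Lemma ideal_base r : R r -> in_ideal R r.
Proof.
move=> h; apply: (@ideal_gen [:: (1, [::], r, [::])]).
  by move=> t; rewrite inE => /eqP ->.
apply: ceqP => G; rewrite sumc_gen big_seq1 mul1r; apply: sumc_ext => v.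
by rewrite cats0.
Qed.

Definition wl (u : seq X) p := [seq (t.1, u ++ t.2) | t <- p].
Definition wr p (u : seq X) := [seq (t.1, t.2 ++ u) | t <- p].

Lemma ideal_wl u p : in_ideal R p -> in_ideal R (wl u p).
Proof.
move=> [l [hl e]].
exists [seq (t.1.1.1, u ++ t.1.1.2, t.1.2, t.2) | t <- l]; split.
  move=> t /mapP[t' t'l ->] /=; exact: hl.
apply: ceqP => G; rewrite sumc_map.
rewrite (ceq_sumc (fun v => G (u ++ v)) e) -/(gen _) !sumc_gen big_map.
by apply: eq_bigr => t _; congr (_ * _); apply: sumc_ext => v; rewrite catA.
Qed.

Lemma ideal_wr u p : in_ideal R p -> in_ideal R (wr p u).
Proof.
move=> [l [hl e]].
exists [seq (t.1.1.1, t.1.1.2, t.1.2, t.2 ++ u) | t <- l]; split.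
  move=> t /mapP[t' t'l ->] /=; exact: hl.
apply: ceqP => G; rewrite (sumc_map (fun v => v ++ u)).
rewrite (ceq_sumc (fun v => G (v ++ u)) e) -/(gen _) !sumc_gen big_map.
by apply: eq_bigr => t _; congr (_ * _); apply: sumc_ext => v; rewrite !catA.
Qed.

Definition EQ p r := in_ideal R (ncsub p r).

Lemma EQ_ceq p r : ceq p r -> EQ p r.
Proof.
move=> h; apply: ideal_nil; apply: ceqP => G.
by rewrite sumc_sub sumc_nil (ceq_sumc _ h) subrr.
Qed.

Lemma EQ_sym p r : EQ p r -> EQ r p.
Proof.
move=> h; apply: (ideal_ceq _ (ideal_scale (-1) h)); apply: ceqP => G.
by rewrite sumc_scale !sumc_sub mulN1r opprB.
Qed.

Lemma EQ_trans p r s : EQ p r -> EQ r s -> EQ p s.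
Proof.
move=> h1 h2; apply: (ideal_ceq _ (ideal_cat h1 h2)); apply: ceqP => G.
by rewrite sumc_cat !sumc_sub addrA subrK.
Qed.

Lemma EQ_cat p p' r r' : EQ p p' -> EQ r r' -> EQ (p ++ r) (p' ++ r').
Proof.
move=> h1 h2; apply: (ideal_ceq _ (ideal_cat h1 h2)); apply: ceqP => G.
rewrite sumc_cat !sumc_sub !sumc_cat; ring.
Qed.

Lemma EQ_scale c p p' : EQ p p' -> EQ (ncscale c p) (ncscale c p').
Proof.
move=> h; apply: (ideal_ceq _ (ideal_scale c h)); apply: ceqP => G.
by rewrite sumc_scale !sumc_sub !sumc_scale mulrBr.
Qed.

Lemma EQ_wl u p p' : EQ p p' -> EQ (wl u p) (wl u p').
Proof.
move=> h; apply: (ideal_ceq _ (ideal_wl u h)); apply: ceqP => G.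
by rewrite sumc_map !sumc_sub !sumc_map.
Qed.

Lemma EQ_wr u p p' : EQ p p' -> EQ (wr p u) (wr p' u).
Proof.
move=> h; apply: (ideal_ceq _ (ideal_wr u h)); apply: ceqP => G.
by rewrite (sumc_map (fun v => v ++ u)) !sumc_sub !(sumc_map (fun v => v ++ u)).
Qed.

Definition lin (L : seq X -> ncpoly X) p := flatten [seq ncscale t.1 (L t.2) | t <- p].

Lemma sumc_lin L p G : sumc (lin L p) G = sumc p (fun v => sumc (L v) G).
Proof. by rewrite /lin sumc_flat. Qed.

Lemma EQ_lin L L' p : (forall u, EQ (L u) (L' u)) -> EQ (lin L p) (lin L' p).
Proof.
move=> h; elim: p => [|t p IH]; first by apply: EQ_ceq.
by apply: EQ_cat => //; apply: EQ_scale.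
Qed.

Lemma EQ_absorb p y : in_ideal R y -> EQ (p ++ y) p.
Proof.
move=> h; apply: (ideal_ceq _ h); apply: ceqP => G.
by rewrite sumc_sub sumc_cat addrAC subrr add0r.
Qed.

End Gen.


Section S.
Variables (I : finType) (C : I -> I -> int) (d : I -> nat) (i : I).

Lemma iotaS0 n : iota 0 n.+1 = 0%N :: map S (iota 0 n).
Proof. by rewrite /= -[1%N]/(1+0)%N iotaDl. Qed.

Lemma sumc_estar_cons j u G :
  sumc (estar_word C d i (j :: u)) G =
  (if j == i then qi d i ^ (- \sum_(t <- u) C i t) * G u else 0) +
  sumc (estar_word C d i u) (fun v => G (j :: v)).
Proof.
rewrite /estar_word [size _]/= iotaS0 /= filter_map /sumc.
case: ifP => _; rewrite ?big_cons !big_map /=; last first.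
  by rewrite add0r; apply: eq_bigr => s _.
rewrite drop0; congr (_ + _); by apply: eq_bigr => s _.
Qed.

Lemma sumc_eprime_cons j u G :
  sumc (eprime_word C d i (j :: u)) G =
  (if j == i then G u else 0) +
  qi d i ^ (- C i j) * sumc (eprime_word C d i u) (fun v => G (j :: v)).
Proof.
have u0 : qi d i \is a GRing.unit.
  by rewrite unitfE /qi /q expf_neq0 // expf_neq0 // /qh tofrac_eq0 polyX_eq0.
rewrite /eprime_word [size _]/= iotaS0 /= filter_map /sumc mulr_sumr.
case: ifP => _; rewrite ?big_cons !big_map /=; last first.
  rewrite add0r; apply: eq_bigr => s _ /=.
  by rewrite big_cons opprD exprzDr // mulrA.
rewrite big_nil oppr0 expr0z mul1r drop0.
congr (_ + _); apply: eq_bigr => s _ /=.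
by rewrite big_cons opprD exprzDr // mulrA.
Qed.

End S.


Section S.
Variables (I : finType) (C : I -> I -> int) (d : I -> nat) (i : I) (k : int).
Hypothesis Cii : C i i = 2.

Lemma qi_neq0 : qi d i != 0.
Proof. by rewrite /qi /q expf_neq0 // expf_neq0 // /qh tofrac_eq0 polyX_eq0. Qed.
Lemma qi_unit : qi d i \is a GRing.unit.
Proof. by rewrite unitfE qi_neq0. Qed.

Definition gl (m : int) := fun j : I => (j, m).
Definition Qw (u : seq I) := qi d i ^ (\sum_(t <- u) C i t).
Definition al := (qi d i ^+ 2)^-1 - 1.

Lemma sumc_phi m p G : sumc (phi m p) G = sumc p (fun v => G (map (gl m) v)).
Proof. by rewrite /phi (sumc_map (map (gl m))). Qed.

Lemma Qw_cons j u : Qw (j :: u) = qi d i ^ C i j * Qw u.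
Proof. by rewrite /Qw big_cons exprzDr // qi_unit. Qed.

Lemma Qw_inv u : Qw u * qi d i ^ (- \sum_(t <- u) C i t) = 1.
Proof.
by rewrite -invr_expz /Qw divff //; apply: expfz_neq0; apply: qi_neq0.
Qed.

Lemma alg_id (F : fieldType) (x c y a A B GM : F) : c = x -> x != 0 -> y * a = 1 ->
  c * (y * A + (x^-1 - 1) * y * B) + (1 - x) * GM =
  c * y * A + (x^-1 - 1) * (c * y) * (a * GM + B).
Proof.
move=> -> xn0 h.
have yn0 : y != 0 by apply/eqP => y0; move: h; rewrite y0 mul0r => /eqP; rewrite eq_sym oner_eq0.
have -> : a = y^-1 by rewrite -[a](mulKf yn0) h mulr1.
by field; rewrite yn0 xn0.
Qed.


Lemma Wi u :
  EQ (RA C d) (ncword ((i, k) :: map (gl (k + 1)) u))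
   (ncscale (Qw u) (ncword (map (gl (k + 1)) u ++ [:: (i, k)])) ++
    ncscale (al * Qw u) (phi (k + 1) (estar_word C d i u))).
Proof.
elim: u => [|j u IH].
  apply: EQ_ceq; apply: ceqP => G.
  rewrite sumc_cat !sumc_scale sumc_word sumc_phi /= sumc_nil /Qw big_nil expr0z.
  by rewrite mul1r mulr0 addr0.
set M := map (gl (k + 1)) u.
have rel : RA C d (ncsub (ncword [:: (i, k); (j, k + 1)])
   (ncadd (ncscale (qi d i ^ C i j) (ncword [:: (j, k + 1); (i, k)]))
          (ncconst _ (if i == j then 1 - qi d i ^+ 2 else 0)))).
  by right; right; exists i, j, k.
have s1 := EQ_wr M (ideal_base rel).
apply: (EQ_trans s1).
apply: (@EQ_trans _ _ _ (ncscale (qi d i ^ C i j) (wl [:: (j, k + 1)] (ncword ((i, k) :: M))) ++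
          ncscale (if i == j then 1 - qi d i ^+ 2 else 0) (ncword M))).
  apply: EQ_ceq; apply: ceqP => G.
  rewrite /ncadd (sumc_map (fun v => v ++ M)) !sumc_cat !sumc_scale !sumc_const !sumc_word.
  by rewrite /wl.
apply: (@EQ_trans _ _ _ (ncscale (qi d i ^ C i j) (wl [:: (j, k + 1)]
   (ncscale (Qw u) (ncword (M ++ [:: (i, k)])) ++
    ncscale (al * Qw u) (phi (k + 1) (estar_word C d i u)))) ++
          ncscale (if i == j then 1 - qi d i ^+ 2 else 0) (ncword M))).
  apply: EQ_cat; first by apply: EQ_scale; apply: EQ_wl.
  by apply: EQ_ceq.
apply: EQ_ceq; apply: ceqP => G.
rewrite !sumc_cat !sumc_scale /wl (sumc_map (cat [:: (j, k + 1)])) sumc_cat !sumc_scale !sumc_word.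
rewrite !sumc_phi.
rewrite sumc_estar_cons Qw_cons.
have eB : sumc (estar_word C d i u) (fun v => G (map (gl (k+1)) (j::v))) =
   sumc (estar_word C d i u) (fun v => G ([:: (j, k + 1)] ++ map (gl (k+1)) v)) by [].
have eA : G (map (gl (k+1)) (j::u) ++ [:: (i, k)]) = G ([:: (j, k + 1)] ++ M ++ [:: (i, k)]) by [].
rewrite eB eA.
set B := sumc _ _.
set A := G _.
rewrite [j == i]eq_sym; case: eqP => [ji|_]; last by rewrite !mul0r !addr0 add0r; ring.
subst j; rewrite /al.
apply: alg_id.
- by rewrite Cii.
- by rewrite expf_neq0 // qi_neq0.
- by rewrite Qw_inv.
Qed.


Hypothesis symm : forall a b, (d a)%:Z * C a b = (d b)%:Z * C b a.

Lemma qi_sym j : qi d j ^ C j i = qi d i ^ C i j.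
Proof.
have e : forall n : nat, q ^+ n = q ^ n%:Z by [].
by rewrite /qi !e !exprz_exp symm.
Qed.

Lemma inv_id (F : fieldType) (c ci : F) : c * ci = 1 -> ci = c^-1.
Proof.
move=> h; have cn0 : c != 0 by apply/eqP => c0; move: h; rewrite c0 mul0r => /eqP; rewrite eq_sym oner_eq0.
by rewrite -[ci](mulKf cn0) h mulr1.
Qed.

Lemma alg_id2 (F : fieldType) (x c ci y A B GM al : F) : c * ci = 1 ->
  y * (c * A + 0 * GM) + al * y * B = c * y * A + al * (c * y) * (0 + ci * B).
Proof.
move=> h; have cn0 : c != 0 by apply/eqP => c0; move: h; rewrite c0 mul0r => /eqP; rewrite eq_sym oner_eq0.
rewrite (inv_id h); by field.
Qed.

Lemma alg_id3 (F : fieldType) (x c ci y A B GM : F) : c = x -> x != 0 -> c * ci = 1 ->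
  y * (c * A + (1 - x) * GM) + (x^-1 - 1) * y * B =
  c * y * A + (x^-1 - 1) * (c * y) * (GM + ci * B).
Proof.
move=> -> xn0 h; rewrite (inv_id h); by field.
Qed.

Lemma Wii u :
  EQ (RA C d) (ncword (map (gl (k - 1)) u ++ [:: (i, k)]))
   (ncscale (Qw u) (ncword ((i, k) :: map (gl (k - 1)) u)) ++
    ncscale (al * Qw u) (phi (k - 1) (eprime_word C d i u))).
Proof.
elim: u => [|j u IH].
  apply: EQ_ceq; apply: ceqP => G.
  rewrite sumc_cat !sumc_scale sumc_word sumc_phi /= sumc_nil /Qw big_nil expr0z.
  by rewrite mul1r mulr0 addr0.
set M := map (gl (k - 1)) u.
have rel : RA C d (ncsub (ncword [:: (j, k - 1); (i, k)])
   (ncadd (ncscale (qi d j ^ C j i) (ncword [:: (i, k); (j, k - 1)]))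
          (ncconst _ (if j == i then 1 - qi d j ^+ 2 else 0)))).
  by right; right; exists j, i, (k - 1); rewrite subrK.
have s1 := EQ_wl [:: (j, k - 1)] IH.
apply: (EQ_trans s1).
apply: (@EQ_trans _ _ _ (ncscale (Qw u) (wr (ncword [:: (j, k - 1); (i, k)]) M) ++
          ncscale (al * Qw u) (wl [:: (j, k - 1)] (phi (k - 1) (eprime_word C d i u))))).
  apply: EQ_ceq; apply: ceqP => G.
  rewrite /wl (sumc_map (cat [:: (j, k - 1)])) !sumc_cat !sumc_scale !sumc_word.
  by rewrite (sumc_map (cat [:: (j, k - 1)])).
apply: (@EQ_trans _ _ _ (ncscale (Qw u) (wr (ncadd (ncscale (qi d j ^ C j i) (ncword [:: (i, k); (j, k - 1)]))
          (ncconst _ (if j == i then 1 - qi d j ^+ 2 else 0))) M) ++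
          ncscale (al * Qw u) (wl [:: (j, k - 1)] (phi (k - 1) (eprime_word C d i u))))).
  apply: EQ_cat; first by apply: EQ_scale; apply: EQ_wr; apply: ideal_base.
  by apply: EQ_ceq.
apply: EQ_ceq; apply: ceqP => G.
rewrite !sumc_cat !sumc_scale /wl /wr (sumc_map (fun v => v ++ M)) (sumc_map (cat [:: (j, k - 1)])).
rewrite /ncadd !sumc_cat !sumc_scale !sumc_word sumc_const !sumc_phi.
rewrite sumc_eprime_cons Qw_cons qi_sym.
have eB : sumc (eprime_word C d i u) (fun v => G (map (gl (k-1)) (j::v))) =
   sumc (eprime_word C d i u) (fun v => G ([:: (j, k - 1)] ++ map (gl (k-1)) v)) by [].
have eA : G (([:: (i, k); (j, k - 1)] ++ M)) = G ((i, k) :: map (gl (k - 1)) (j :: u)) by [].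
rewrite eB eA.
set B := sumc _ _.
set A := G _.
have hc : qi d i ^ C i j * qi d i ^ (- C i j) = 1.
  by rewrite -exprzDr ?qi_unit // subrr.
case: eqP => [ji|_]; last by apply: alg_id2.
subst j; rewrite /al; apply: alg_id3 => //.
- by rewrite Cii.
- by rewrite expf_neq0 // qi_neq0.
Qed.

End S.


Lemma odd_absz_S (k : int) : odd (absz (k + 1)) = ~~ odd (absz k).
Proof.
case: k => n.
  by rewrite -PoszD /= addn1 /=.
rewrite NegzE -addn1 PoszD opprD addrNK abszN /=.
by rewrite -opprD abszN -PoszD addn1 /= negbK.
Qed.

Definition sg (m : int) : int := if odd (absz m) then 1 else -1.

Lemma sg_S k : sg k * sg (k + 1) = -1.
Proof. by rewrite /sg odd_absz_S; case: (odd _). Qed.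
Lemma sg_P k : sg k * sg (k - 1) = -1.
Proof. by rewrite -{1}(subrK 1 k) mulrC sg_S. Qed.

Section W.
Variables (I : finType) (C : I -> I -> int) (d : I -> nat) (i : I).

Lemma rform_ext la la' mu mu' : (forall a, la a = la' a) -> (forall b, mu b = mu' b) ->
  rform C d la mu = rform C d la' mu'.
Proof.
by move=> h1 h2; rewrite /rform; apply: eq_bigr => a _; apply: eq_bigr => b _; rewrite h1 h2.
Qed.

Lemma sum_delta (F : I -> int) j x :
  \sum_(b : I) F b * (if j == b then x else 0) = F j * x.
Proof.
rewrite (bigD1 j) //= eqxx big1 ?addr0 // => b /negbTE; rewrite eq_sym => ->.
by rewrite mulr0.
Qed.

Lemma rform_delta x mu :
  rform C d (fun a => if i == a then x else 0) mu = x * (d i)%:Z * \sum_(b : I) C i b * mu b.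
Proof.
rewrite /rform (eq_bigr (fun a => (\sum_b (d a)%:Z * C a b * mu b) * (if i == a then x else 0))); last first.
  by move=> a _; rewrite mulr_suml; apply: eq_bigr => b _; ring.
rewrite sum_delta mulrC -mulrA mulr_sumr; congr (_ * _); apply: eq_bigr => b _; ring.
Qed.

Lemma sum_wt m u :
  \sum_(b : I) C i b * wt_word (map (gl m) u) b = sg m * \sum_(t <- u) C i t.
Proof.
elim: u => [|j u IH].
  by rewrite big_nil mulr0 big1 // => b _; rewrite /wt_word big_nil mulr0.
rewrite big_cons mulrDr -IH /wt_word /=.
rewrite (eq_bigr (fun b => C i b * (if j == b then sg m else 0) + C i b * \sum_(g <- map (gl m) u) wtA g b)); last first.
  by move=> b _; rewrite big_cons -mulrDr.
by rewrite big_split /= sum_delta mulrC.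
Qed.

Lemma wt_exp k m (ga : I -> int) u : sg k * sg m = -1 ->
  (forall a, wt_word (map (gl m) u) a = ga a) ->
  q ^ (- rform C d (wt_word [:: (i, k)]) ga) = Qw C d i u.
Proof.
move=> hs hg.
rewrite (@rform_ext _ (fun a => if i == a then sg k else 0) _ ga); last 2 first.
- by move=> a; rewrite /wt_word big_seq1 /wtA /=.
- by [].
rewrite rform_delta (eq_bigr (fun b => C i b * wt_word (map (gl m) u) b)); last by move=> b _; rewrite hg.
rewrite sum_wt.
have -> : - (sg k * (d i)%:Z * (sg m * \sum_(t <- u) C i t)) = (d i)%:Z * \sum_(t <- u) C i t.
  rewrite [LHS](_ : _ = - (sg k * sg m) * ((d i)%:Z * \sum_(t <- u) C i t)); last by ring.
  by rewrite hs opprK mul1r.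
by rewrite -exprz_exp.
Qed.

End W.


Section M.
Variables (I : finType) (C : I -> I -> int) (d : I -> nat).

Lemma phi_serre m a b :
  phi m (serre_rel C d id a b) = serre_rel C d (fun x => (x, m)) a b.
Proof.
rewrite /phi /serre_rel map_flatten -map_comp; congr flatten; apply: eq_map => r /=.
by rewrite map_cat map_nseq /= map_nseq.
Qed.

Lemma ideal_phi m e : in_ideal (RU C d) e -> in_ideal (RA C d) (phi m e).
Proof.
move=> [l [hl he]].
exists [seq (t.1.1.1, map (@gl I m) t.1.1.2, phi m t.1.2, map (@gl I m) t.2) | t <- l]; split.
  move=> t /mapP[t' t'l ->] /=.
  have [a [b [ab ->]]] := hl t' t'l.
  by left; exists m, a, b; split => //; rewrite phi_serre.
apply: ceqP => G; rewrite sumc_phi (ceq_sumc _ he) -/(gen _) !sumc_gen big_map.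
apply: eq_bigr => t _ /=; rewrite sumc_phi; congr (_ * _); apply: sumc_ext => v.
by rewrite !map_cat.
Qed.

Lemma gl_inj m : injective (@gl I m).
Proof. by move=> a b []. Qed.

Lemma nccoef_phi m x v : nccoef (phi m x) (map (@gl I m) v) = nccoef x v.
Proof.
rewrite !nccoefE sumc_phi; apply: sumc_ext => w.
by rewrite (inj_eq (inj_map (@gl_inj m))).
Qed.

End M.


Definition lin2 (X Y : eqType) (L : seq Y -> ncpoly X) (p : ncpoly Y) : ncpoly X :=
  flatten [seq ncscale t.1 (L t.2) | t <- p].

Lemma sumc_lin2 (X Y : eqType) (L : seq Y -> ncpoly X) p G :
  sumc (lin2 L p) G = sumc p (fun v => sumc (L v) G).
Proof. by rewrite /lin2 sumc_flat. Qed.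

Lemma EQ_lin2 (X Y : eqType) (R : ncpoly X -> Prop) (L L' : seq Y -> ncpoly X) p :
  (forall u, EQ R (L u) (L' u)) -> EQ R (lin2 L p) (lin2 L' p).
Proof.
move=> h; elim: p => [|t p IH]; first by apply: EQ_ceq.
by apply: EQ_cat => //; apply: EQ_scale.
Qed.

Theorem lemma6p2 (I : finType) (C : I -> I -> int) (d : I -> nat)
  (hC : is_finite_cartan C d) (i : I) (k : int) :
  (forall (x : ncpoly I) (ga : I -> int),
     homogeneous (phi (k + 1) x) ga ->
     in_ideal (RU C d) (estar C d i x) ->
     nceqmod (RA C d)
       (ncmul (ncword [:: (i, k)]) (phi (k + 1) x))
       (ncscale (q ^ (- rform C d (wt_word [:: (i, k)]) ga))
                (ncmul (phi (k + 1) x) (ncword [:: (i, k)]))))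
  /\
  (forall (y : ncpoly I) (ga : I -> int),
     homogeneous (phi (k - 1) y) ga ->
     in_ideal (RU C d) (eprime C d i y) ->
     nceqmod (RA C d)
       (ncmul (phi (k - 1) y) (ncword [:: (i, k)]))
       (ncscale (q ^ (- rform C d (wt_word [:: (i, k)]) ga))
                (ncmul (ncword [:: (i, k)]) (phi (k - 1) y)))).
Proof.
have Cii := cartan_diag hC i.
have symm := cartan_symmetrizable hC.
split.
  move=> x ga hom hid.
  set Qg := q ^ _.
  have hQ : forall v, nccoef x v != 0 -> Qw C d i v = Qg.
    move=> v nz; rewrite /Qg (@wt_exp _ C d i k (k + 1) ga v) //; first by rewrite sg_S.
    by apply: hom; rewrite nccoef_phi.
  rewrite /nceqmod -/(EQ _ _ _).
  apply: (@EQ_trans _ _ _ (lin2 (fun u => ncword ((i, k) :: map (@gl I (k + 1)) u)) x)).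
    apply: EQ_ceq; apply: ceqP => G.
    rewrite sumc_mul sumc_word sumc_phi sumc_lin2; apply: sumc_ext => v.
    by rewrite sumc_word.
  apply: (EQ_trans (EQ_lin2 x (fun u => @Wi I C d i k Cii u))).
  apply: (@EQ_trans _ _ _ (ncscale Qg (ncmul (phi (k + 1) x) (ncword [:: (i, k)])) ++
        ncscale (al d i * Qg) (phi (k + 1) (estar C d i x)))); last first.
    apply: EQ_absorb; apply: ideal_scale; exact: ideal_phi.
  apply: EQ_ceq; apply: ceqP => G.
  rewrite sumc_lin2 sumc_cat !sumc_scale sumc_mul sumc_phi sumc_phi.
  change (estar C d i x) with (lin (estar_word C d i) x).
  rewrite sumc_lin.
  rewrite (@sumc_ext _ _ _ (fun v => Qw C d i v * (G (map (@gl I (k + 1)) v ++ [:: (i, k)]) +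
             al d i * sumc (phi (k + 1) (estar_word C d i v)) G))); last first.
    by move=> v; rewrite sumc_cat !sumc_scale sumc_word; ring.
  rewrite (sumc_hom _ hQ) sumc_add sumc_mulc.
  have e1 : sumc x (fun v => sumc (ncword [:: (i, k)]) (fun v0 => G (map (@gl I (k + 1)) v ++ v0))) =
     sumc x (fun v => G (map (@gl I (k + 1)) v ++ [:: (i, k)])).
    by apply: sumc_ext => v; rewrite sumc_word.
  have e2 : sumc x (fun v => sumc (estar_word C d i v) (fun v0 => G (map (@gl I (k + 1)) v0))) =
     sumc x (fun v => sumc (phi (k + 1) (estar_word C d i v)) G).
    by apply: sumc_ext => v; rewrite sumc_phi.
  rewrite e1 e2; ring.
move=> y ga hom hid.
set Qg := q ^ _.
have hQ : forall v, nccoef y v != 0 -> Qw C d i v = Qg.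
  move=> v nz; rewrite /Qg (@wt_exp _ C d i k (k - 1) ga v) //; first by rewrite sg_P.
  by apply: hom; rewrite nccoef_phi.
rewrite /nceqmod -/(EQ _ _ _).
apply: (@EQ_trans _ _ _ (lin2 (fun u => ncword (map (@gl I (k - 1)) u ++ [:: (i, k)])) y)).
  apply: EQ_ceq; apply: ceqP => G.
  rewrite sumc_mul sumc_phi sumc_lin2; apply: sumc_ext => v.
  by rewrite !sumc_word.
apply: (EQ_trans (EQ_lin2 _ (fun u => @Wii I C d i k Cii symm u))).
apply: (@EQ_trans _ _ _ (ncscale Qg (ncmul (ncword [:: (i, k)]) (phi (k - 1) y)) ++
      ncscale (al d i * Qg) (phi (k - 1) (eprime C d i y)))); last first.
  apply: EQ_absorb; apply: ideal_scale; exact: ideal_phi.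
apply: EQ_ceq; apply: ceqP => G.
rewrite sumc_lin2 sumc_cat !sumc_scale sumc_mul sumc_word sumc_phi sumc_phi.
change (eprime C d i y) with (lin (eprime_word C d i) y).
rewrite sumc_lin.
rewrite (@sumc_ext _ _ _ (fun v => Qw C d i v * (G ((i, k) :: map (@gl I (k - 1)) v) +
           al d i * sumc (phi (k - 1) (eprime_word C d i v)) G))); last first.
  by move=> v; rewrite sumc_cat !sumc_scale sumc_word; ring.
rewrite (sumc_hom _ hQ) sumc_add sumc_mulc.
have e2 : sumc y (fun v => sumc (eprime_word C d i v) (fun v0 => G (map (@gl I (k - 1)) v0))) =
   sumc y (fun v => sumc (phi (k - 1) (eprime_word C d i v)) G).
  by apply: sumc_ext => v; rewrite sumc_phi.
rewrite e2.
have e1 : sumc y (fun v => G ([:: (i, k)] ++ map (@gl I (k - 1)) v)) =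
   sumc y (fun v => G ((i, k) :: map (@gl I (k - 1)) v)) by [].
rewrite e1; ring.
Qed.
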